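(* Let $A$ be an $n\times n$ real symmetric matrix, let $\alpha \subseteq \{1,\dots,n\}$ be a set of P-vertices of $A$, and let $\beta \subseteq \{1,\dots,n\}$ be such that $\alpha \subseteq \beta$ and the rows of $A$ indexed by $\beta$ form a basis of the row space of $A$. If $\alpha$ is a P-set of the principal submatrix $A[\beta]$ (with indices of $\alpha$ understood as indices of $A[\beta]$), then $\alpha$ is a P-set of $A$.
   Context: All matrices are real. $A[\beta]$ denotes the principal submatrix of $A$ with rows and columns indexed by $\beta$. For an $n\times n$ matrix $A$ and $\alpha \subseteq \{1,\dots,n\}$, $A(\alpha)$ denotes the principal submatrix obtained by deleting the rows and columns indexed by $\alpha$, and $\nu(A)$ denotes the nullity of $A$. Index $i$ is a P-vertex of $A$ if $\nu(A(\{i\})) = \nu(A)+1$. A set $\alpha$ is a P-set of $A$ if $\nu(A(\alpha)) = \nu(A) + |\alpha|$. *)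

(* Defs.v *)
From HB Require Import structures.
From mathcomp Require Import all_boot all_order all_algebra.
Set Implicit Arguments. Unset Strict Implicit. Unset Printing Implicit Defensive.
Import GRing.Theory Num.Theory.
Local Open Scope ring_scope.

(* Principal submatrix A[S] of a square matrix, rows/cols indexed by S
   (in increasing order, via enum_val). *)
Definition psub (R : Type) (n : nat) (A : 'M[R]_n) (S : {set 'I_n}) : 'M[R]_#|S| :=
  mxsub (@enum_val _ (mem S)) (@enum_val _ (mem S)) A.

Definition pdel (R : Type) (n : nat) (A : 'M[R]_n) (alpha : {set 'I_n}) :=
  psub A (~: alpha).

Definition nullity (F : fieldType) (m : nat) (A : 'M[F]_m) : nat := (m - \rank A)%N.

Definition P_vertex (F : fieldType) (n : nat) (A : 'M[F]_n) (i : 'I_n) : Prop :=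
  nullity (pdel A [set i]) = (nullity A + 1)%N.

Definition P_set (F : fieldType) (n : nat) (A : 'M[F]_n) (alpha : {set 'I_n}) : Prop :=
  nullity (pdel A alpha) = (nullity A + #|alpha|)%N.

Definition rows_basis (F : fieldType) (m n : nat) (A : 'M[F]_(m, n)) (beta : {set 'I_m}) : Prop :=
  row_free (rowsub (@enum_val _ (mem beta)) A) /\
  (rowsub (@enum_val _ (mem beta)) A == A)%MS.

Definition idx_in_sub (n : nat) (beta alpha : {set 'I_n}) : {set 'I_#|beta|} :=
  [set k : 'I_#|beta| | enum_val k \in alpha].
Arguments psub {R n} A S.
Arguments pdel {R n} A alpha.
Arguments nullity {F m} A.
Arguments P_vertex {F n} A i.
Arguments P_set {F n} A alpha.
Arguments rows_basis {F m n} A beta.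
Arguments idx_in_sub {n} beta alpha.

(* Main.v *)
Require Import Defs.
From HB Require Import structures.
From mathcomp Require Import all_boot all_order all_algebra.
From mathcomp Require Import zify.
Import GRing.Theory Num.Theory.
Local Open Scope ring_scope.

Set Implicit Arguments.
Section S.
Variable F : fieldType.

Lemma lemG n p q (A : 'M[F]_n) (f : 'I_p -> 'I_n) (g : 'I_q -> 'I_n) :
  A^T = A -> (rowsub f A <= rowsub g A)%MS ->
  (\rank (mxsub f f A) <= \rank (mxsub g g A))%N.
Proof.
move=> hA /submxP [Z hZ].
have e1 : mxsub f g A = Z *m mxsub g g A.
  by rewrite mxsubcr hZ -mulmx_colsub -mxsubcr.
have e2 : mxsub f f A = Z *m ((mxsub g g A) *m Z^T).
  rewrite mxsubcr hZ -mulmx_colsub -mxsubcr.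
  have -> : mxsub g f A = (mxsub f g A)^T by rewrite trmx_mxsub hA.
  by rewrite e1 trmx_mul trmx_mxsub hA.
rewrite e2; apply: leq_trans (mxrankM_maxr _ _) _; exact: mxrankM_maxl.
Qed.

Lemma rowsub_sub n p q (A : 'M[F]_n) (f : 'I_p -> 'I_n) (g : 'I_q -> 'I_n) :
  (forall k, exists k', f k = g k') -> (rowsub f A <= rowsub g A)%MS.
Proof.
move=> h; apply/row_subP => k; rewrite row_rowsub.
have [k' ->] := h k; rewrite -row_rowsub; exact: row_sub.
Qed.

Lemma rowS n (A : 'M[F]_n) (S : {set 'I_n}) x : x \in S ->
  (row x A <= rowsub (@enum_val _ (mem S)) A)%MS.
Proof.
move=> hx; rewrite -(enum_rankK_in hx hx) -row_rowsub; exact: row_sub.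
Qed.

Lemma inS n (S : {set 'I_n}) (k : 'I_#|S|) : enum_val k \in S.
Proof. exact: enum_valP. Qed.

Lemma key m r (B : 'M[F]_(r, m)) p (E : 'M[F]_(p, m)) (v : 'rV_m) (c : 'rV_r) k :
  v = c *m B -> c 0 k != 0 -> (v <= E)%MS ->
  (forall k', k' != k -> (row k' B <= E)%MS) -> (row k B <= E)%MS.
Proof.
move=> hv ck hvE hk.
have : row k B = (c 0 k)^-1 *: (v - \sum_(k' | k' != k) c 0 k' *: row k' B).
  rewrite hv mulmx_sum_row (bigD1 k) //= addrK scalerA mulVf // scale1r //.
move=> ->; apply: scalemx_sub; apply: addmx_sub => //.
rewrite raddf_sum /=; apply: summx_sub => k' hk'.
by rewrite -scaleNr; apply: scalemx_sub; apply: hk.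
Qed.

Lemma ex_enum n (S : {set 'I_n}) x : x \in S -> exists k : 'I_#|S|, x = enum_val k.
Proof. by move=> hx; exists (enum_rank_in hx x); rewrite enum_rankK_in. Qed.

Lemma pvert_row n (A : 'M[F]_n) i : A^T = A -> P_vertex A i ->
  ~~ (row i A <= rowsub (@enum_val _ (mem (~: [set i]))) A)%MS.
Proof.
move=> hA hP; apply/negP => hi.
have hsub : (rowsub id A <= rowsub (@enum_val _ (mem (~: [set i]))) A)%MS.
  apply/row_subP => j; rewrite row_rowsub.
  case: (eqVneq j i) => [->//|hj]; apply: rowS; by rewrite !inE.
have := lemG hA hsub; rewrite mxsub_id => hle.
move: hP; rewrite /P_vertex /nullity /pdel /psub => hP.
have hc : #|~: [set i]| = n.-1 by rewrite cardsC1 card_ord.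
have h2 := rank_leq_row A.
have hn : (0 < n)%N by case: n i {A hA hi hsub hle hP hc h2} => [[]|].
move: hP hle; set b := \rank (mxsub _ _ A); move: b => b hP hle; rewrite hc in hP.
lia.
Qed.
End S.

Lemma natH (a b c : nat) : (a + b)%N = c -> b = (c - a)%N.
Proof. lia. Qed.

Lemma arith (n b a x y z rA cl ca ca' : nat) : cl = (b - a)%N -> ca = (n - a)%N -> (a <= b)%N -> rA = b -> (rA <= n)%N ->
  (x <= cl)%N -> x = z -> y = z -> (cl - x)%N = (b - b + ca')%N -> ca' = a -> (ca - y)%N = (n - rA + a)%N.
Proof. lia. Qed.

Theorem corollary2p3 (R : realFieldType) (n : nat) (A : 'M[R]_n)
  (alpha beta : {set 'I_n}) :
  A^T = A ->
  (forall i, i \in alpha -> P_vertex A i) ->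
  alpha \subset beta ->
  rows_basis A beta ->
  P_set (psub A beta) (idx_in_sub beta alpha) ->
  P_set A alpha.
Proof.
move=> hA hPv hab [hfree heq] hPs.
set Bf := @enum_val _ (mem beta).
have hAB : (A <= rowsub Bf A)%MS by case/andP: heq.
have hr : \rank A = #|beta|.
  by rewrite -(eqmx_rank heq); apply/eqP.
have hM : \rank (psub A beta) = #|beta|.
  have hle : (\rank A <= \rank (psub A beta))%N.
    have := @lemG _ _ _ _ A id Bf hA; rewrite mxsub_id; apply.
    by rewrite ?mxsub_id.
  have := rank_leq_row (psub A beta); lia.
have crux : (rowsub (@enum_val _ (mem (~: alpha)%SET)) A <=
             rowsub (@enum_val _ (mem (beta :\: alpha)%SET)) A)%MS.
  apply/row_subP => k; rewrite row_rowsub.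
  set j := enum_val k.
  have hj : j \notin alpha by have := enum_valP k; rewrite inE.
  have /submxP [c hc] : (row j A <= rowsub Bf A)%MS
    by apply: submx_trans hAB; apply: row_sub.
  rewrite hc mulmx_sum_row; apply: summx_sub => k1 _.
  case: (boolP (Bf k1 \in alpha)) => hk1.
    case: (eqVneq (c 0 k1) 0) => [->|hc0]; first by rewrite scale0r sub0mx.
    exfalso; move/negP: (pvert_row hA (hPv _ hk1)); apply.
    have H := key (E := rowsub (@enum_val _ (mem (~: [set Bf k1])%SET)) A) k1 hc hc0.
    rewrite row_rowsub in H.
apply: H.
      by apply: rowS; rewrite !inE; apply: contraNneq hj => ->.
    move=> k' hk'; rewrite row_rowsub; apply: rowS; rewrite !inE.
    by apply: contra hk' => /eqP /enum_val_inj ->.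
  by apply: scalemx_sub; rewrite row_rowsub; apply: rowS; rewrite !inE hk1 /= enum_valP.
have crux2 : (rowsub (@enum_val _ (mem (beta :\: alpha)%SET)) A <=
             rowsub (@enum_val _ (mem (~: alpha)%SET)) A)%MS.
  apply: rowsub_sub => k; apply: ex_enum.
  by have := enum_valP k; rewrite !inE => /andP [].
have hg := lemG hA crux; have hd := lemG hA crux2.
set al' := idx_in_sub beta alpha.
set E := @enum_val _ (mem (~: al')%SET).
have hpd : pdel (psub A beta) al' = mxsub (Bf \o E) (Bf \o E) A.
  by rewrite /pdel /psub mxsub_comp.
have hs1 : (rowsub (Bf \o E) A <= rowsub (@enum_val _ (mem (beta :\: alpha)%SET)) A)%MS.
  apply: rowsub_sub => k; apply: ex_enum; rewrite !inE /= enum_valP andbT.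
  by have := enum_valP k; rewrite !inE.
have hs2 : (rowsub (@enum_val _ (mem (beta :\: alpha)%SET)) A <= rowsub (Bf \o E) A)%MS.
  apply: rowsub_sub => k.
  have := enum_valP k; rewrite !inE => /andP [hk1 hk2].
  have [k1 hk] := ex_enum hk2; rewrite hk in hk1 *.
  have : k1 \in ~: al' by rewrite !inE.
  by move/ex_enum => [k2 ->]; exists k2.
have h1 := lemG hA hs1; have h2 := lemG hA hs2.
have hcal : #|al'| = #|alpha|.
  have <- : Bf @: al' = alpha.
    apply/setP => x; apply/imsetP/idP => [[k]|hx].
      by rewrite inE => ? ->.
    have [k hk] := ex_enum (subsetP hab _ hx).
    by exists k => //; rewrite inE -hk.
  by rewrite card_imset //; apply: enum_val_inj.
have hcl : #|~: al'| = (#|beta| - #|alpha|)%N.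
  have h := cardsC al'; rewrite card_ord hcal in h; exact: natH h.
have hca : #|~: alpha| = (n - #|alpha|)%N.
  have h := cardsC alpha; rewrite card_ord in h; exact: natH h.
have hab' := subset_leq_card hab.
have hrn := rank_leq_row A.
have Hg : (\rank (pdel A alpha) <= \rank (psub A (beta :\: alpha)%SET))%N := lemG hA crux.
have Hd : (\rank (psub A (beta :\: alpha)%SET) <= \rank (pdel A alpha))%N := lemG hA crux2.
have H1 : \rank (pdel (psub A beta) al') = \rank (psub A (beta :\: alpha)%SET).
  rewrite hpd; apply/eqP; rewrite eqn_leq; apply/andP; split; [exact: lemG hA hs1 | exact: lemG hA hs2].
have hrl := rank_leq_row (pdel (psub A beta) al').
move: hPs; rewrite /P_set /nullity hM => hP.
rewrite /P_set /nullity.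
have Hy : \rank (pdel A alpha) = \rank (psub A (beta :\: alpha)%SET).
  by apply/eqP; rewrite eqn_leq Hg Hd.
exact: (@arith _ _ _ _ _ _ _ _ _ _ hcl hca hab' hr hrn hrl H1 Hy hP hcal).
Qed.
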